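(* Let $(X,r)$ be a non-degenerate involutive set-theoretic solution with $|X|=n$, identified with $\{1,\dots,n\}$, and let $(\mathcal{X}^2,\tilde r)$ be the induced pair. Then: (i) if $(X,r)$ is irretractable, then $(\mathcal{X}^2,\tilde r)$ is irretractable; (ii) if $(X,r)$ is a multipermutation solution of level $\ell$, then $(\mathcal{X}^2,\tilde r)$ is a multipermutation solution of level $\ell$; (iii) if $(X,r)$ is decomposable, then $(\mathcal{X}^2,\tilde r)$ is decomposable.
   Context: A set-theoretic solution is $r:X\times X\to X\times X$, $r(x,y)=(\sigma_x(y),\gamma_y(x))$, with $r^{12}r^{23}r^{12}=r^{23}r^{12}r^{23}$ ($r^{12}=r\times\mathrm{Id}_X$, $r^{23}=\mathrm{Id}_X\times r$); non-degenerate: all $\sigma_x,\gamma_x$ bijective; involutive: $r\circ r=\mathrm{Id}$. Induced pair: $\mathcal{X}^2=\{T_i^k:1\le i,k\le n\}$ ($n^2$ symbols), $\tilde r(T_i^k,T_j^l)=(T_{\sigma_i(j)}^{\sigma_k(l)},T_{\gamma_j(i)}^{\gamma_l(k)})$, a non-degenerate involutive solution with maps $g_i^k(T_j^l)=T_{\sigma_i(j)}^{\sigma_k(l)}$ in the role of $\sigma$. Retraction: $x\sim y$ iff $\sigma_x=\sigma_y$; $\mathrm{Ret}(X,r)=(X/\!\sim,r')$ with $r'([x],[y])=([\sigma_x(y)],[\gamma_y(x)])$, $\mathrm{Ret}^k=\mathrm{Ret}(\mathrm{Ret}^{k-1})$. $(X,r)$ is a multipermutation solution of level $\ell$ if $\ell$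 is the smallest natural number with $|\mathrm{Ret}^\ell(X,r)|=1$; irretractable if no such $\ell$ exists. A subset $Y$ is non-degenerate invariant if $r(Y\times Y)\subseteq Y\times Y$ and $(Y,r|_{Y^2})$ is a non-degenerate involutive solution; $(X,r)$ is decomposable if $X$ is a union of two non-empty disjoint non-degenerate invariant subsets. *)

(* Defs.v *)
From mathcomp Require Import all_boot.
Set Implicit Arguments. Unset Strict Implicit. Unset Printing Implicit Defensive.

(* A "pair" (X, r) on a finite set X, given by the two families of maps:
   sg x y = sigma_x(y),  gm y x = gamma_y(x),
   so that r(x,y) = (sg x y, gm y x). *)
Record sol := Sol {
  car :> finType;
  sg : car -> car -> car;
  gm : car -> car -> car }.

Definition rmap (S : sol) (p : S * S) : S * S :=
  (sg p.1 p.2, gm p.2 p.1).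

Definition r12 (S : sol) (t : S * S * S) : S * S * S :=
  let: (x, y, z) := t in let: (a, b) := rmap (x, y) in (a, b, z).
Definition r23 (S : sol) (t : S * S * S) : S * S * S :=
  let: (x, y, z) := t in let: (b, c) := rmap (y, z) in (x, b, c).

Definition braid (S : sol) : Prop :=
  forall t : S * S * S, r12 (r23 (r12 t)) = r23 (r12 (r23 t)).
Definition nondegenerate (S : sol) : Prop :=
  forall x : S, bijective (sg x) /\ bijective (gm x).
Definition involutive (S : sol) : Prop :=
  forall p : S * S, rmap (rmap p) = p.

Definition ndi_solution (S : sol) : Prop :=
  braid S /\ nondegenerate S /\ involutive S.

Definition cls (S : sol) (x : S) : {set S} :=
  [set y | [forall z, sg y z == sg x z]].

Definition is_cls (S : sol) (A : {set S}) : bool := [exists x, A == cls x].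

Definition retT (S : sol) : finType := {A : {set S} | is_cls A}.

Definition clsR (S : sol) (x : S) : retT S :=
  exist (fun A => is_cls A) (cls x) (introT (@existsP _ (fun y => cls x == cls y)) (ex_intro _ x (eqxx _))).

Definition rep (S : sol) (A : retT S) : S := xchoose (existsP (valP A)).

Definition ret (S : sol) : sol :=
  @Sol (retT S)
    (fun A B => clsR (sg (rep A) (rep B)))
    (fun B A => clsR (gm (rep B) (rep A))).

Definition Ret_iter (k : nat) (S : sol) : sol := iter k ret S.

Definition multipermutation_level (S : sol) (l : nat) : Prop :=
  #|car (Ret_iter l S)| = 1 /\ (forall k, k < l -> #|car (Ret_iter k S)| <> 1).

Definition irretractable (S : sol) : Prop :=
  forall k, #|car (Ret_iter k S)| <> 1.

Definition nd_invariant (S : sol) (Y : {set S}) : Prop :=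
  (forall x y, x \in Y -> y \in Y -> sg x y \in Y /\ gm y x \in Y) /\
  (forall x, x \in Y -> forall z, z \in Y ->
     (exists y, y \in Y /\ sg x y = z /\ (forall y', y' \in Y -> sg x y' = z -> y' = y)) /\
     (exists y, y \in Y /\ gm x y = z /\ (forall y', y' \in Y -> gm x y' = z -> y' = y))) /\
  (forall x y z, x \in Y -> y \in Y -> z \in Y ->
     r12 (r23 (r12 (x, y, z))) = r23 (r12 (r23 (x, y, z)))) /\
  (forall x y, x \in Y -> y \in Y -> rmap (rmap (x, y)) = (x, y)).

Definition decomposable (S : sol) : Prop :=
  exists Y Z : {set S},
    [/\ Y != set0, Z != set0, [disjoint Y & Z], Y :|: Z = setT &
        nd_invariant Y /\ nd_invariant Z].

(* T_i^k is encoded as (i, k) : X * X;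
   r~(T_i^k, T_j^l) = (T_{sigma_i(j)}^{sigma_k(l)}, T_{gamma_j(i)}^{gamma_l(k)}) *)
Definition induced (S : sol) : sol :=
  @Sol (S * S)%type
    (fun p q => (sg p.1 q.1, sg p.2 q.2))
    (fun q p => (gm q.1 p.1, gm q.2 p.2)).

(* Main.v *)
Require Import Defs.
From mathcomp Require Import all_boot all_fingroup zify.

Set Implicit Arguments. Unset Strict Implicit. Unset Printing Implicit Defensive.

Definition eqv (S : sol) (x y : S) := forall z, sg x z = sg y z.

Lemma cls_eq (S : sol) (x y : S) : cls x = cls y <-> eqv x y.
Proof.
split.
- move=> H z. have : x \in cls y by rewrite -H inE; apply/forallP.
  by rewrite inE => /forallP /(_ z) /eqP.
- move=> H; apply/setP => w; rewrite !inE; apply/forallP/forallP => H' z.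
  + by rewrite -H.
  + by rewrite H.
Qed.

Lemma clsR_eq (S : sol) (x y : S) : clsR x = clsR y <-> eqv x y.
Proof.
rewrite -cls_eq; split; first by move/(congr1 val).
by move=> H; apply: val_inj.
Qed.

Lemma retP (S : sol) (A : retT S) : A = clsR (rep A).
Proof. by apply: val_inj => /=; apply/eqP; exact: (xchooseP (existsP (valP A))). Qed.

Lemma exP (S : sol) (A : retT S) : exists a, A = clsR a.
Proof. by exists (rep A); apply: retP. Qed.

Lemma rep_clsR (S : sol) (x : S) : eqv (rep (clsR x)) x.
Proof. by move=> z; have /clsR_eq := retP (clsR x); move=> /(_ z) ->. Qed.

Definition good (S : sol) := (forall x : S, injective (sg x)) /\
  forall x y : S, exists t, sg (sg x y) t = x /\
     forall z, sg x (sg y z) = sg (sg x y) (sg t z).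

Lemma ndi_good (S : sol) : ndi_solution S -> good S.
Proof.
case=> Hb [Hn Hi]; split.
- by move=> x; apply: bij_inj; case: (Hn x).
- move=> x y; exists (gm y x); split.
  + by have := congr1 fst (Hi (x, y)).
  + move=> z; have := congr1 (fun t => t.1.1) (Hb (x, y, z)).
    by rewrite /r12 /r23 /rmap /= => ->.
Qed.

Lemma wd_back (S : sol) : good S -> forall x a a' : S,
  eqv (sg x a) (sg x a') -> eqv a a'.
Proof.
case=> inj H x a a' E z.
have [t [Ht Hz]] := H x a. have [t' [Ht' Hz']] := H x a'.
have tt' : t = t'.
  by apply: (inj (sg x a)); rewrite Ht E Ht'.
apply: (inj x); rewrite Hz Hz' -tt' E //.
Qed.

Lemma wd_fwd (S : sol) : good S -> forall x b b' : S,
  eqv b b' -> eqv (sg x b) (sg x b').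
Proof.
move=> G x b b' E.
have inj := G.1 x.
pose p := perm inj.
have Hp k : eqv ((p ^+ k.+1)%g b) ((p ^+ k.+1)%g b') ->
            eqv ((p ^+ k)%g b) ((p ^+ k)%g b').
  rewrite expgSr !permM !permE; exact: wd_back G x _ _.
have main m : m <= #[p]%g ->
   eqv ((p ^+ (#[p]%g - m))%g b) ((p ^+ (#[p]%g - m))%g b').
  elim: m => [|m IH] Hm.
    by rewrite subn0 expg_order !perm1.
  apply: Hp.
  have -> : (#[p]%g - m.+1).+1 = #[p]%g - m.
    have := order_gt0 p; lia.
  apply: IH; lia.
have := main (#[p]%g).-1 (leq_pred _).
have -> : #[p]%g - (#[p]%g).-1 = 1 by have := order_gt0 p; lia.
by rewrite expg1 !permE.
Qed.

Lemma K (S : sol) : good S -> forall a b : S,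
  @sg (ret S) (clsR a) (clsR b) = clsR (sg a b).
Proof.
move=> G a b /=; apply/clsR_eq => z.
rewrite (rep_clsR a).
exact: (wd_fwd G a (rep_clsR b)).
Qed.

Lemma good_ret (S : sol) : good S -> good (ret S).
Proof.
move=> G; split.
- move=> A B B'; have [a ->] := exP A; have [b ->] := exP B.
  have [b' ->] := exP B'.
  rewrite !(K G) => /clsR_eq E; apply/clsR_eq; exact: wd_back G _ _ _ E.
- move=> A B; have [a ->] := exP A; have [b ->] := exP B.
  have [t [Ht Hz]] := G.2 a b.
  exists (clsR t); rewrite !(K G) Ht; split; first by [].
  move=> Z; have [z ->] := exP Z; by rewrite !(K G) Hz.
Qed.

Definition iso (S T : sol) := exists f : S -> T,
  bijective f /\ forall x y, f (sg x y) = sg (f x) (f y).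

Lemma iso_refl (S : sol) : iso S S.
Proof. by exists id; split => //; exists id. Qed.

Lemma iso_trans (S T U : sol) : iso S T -> iso T U -> iso S U.
Proof.
case=> f [bf hf] [g [bg hg]]; exists (g \o f); split.
- exact: bij_comp.
- by move=> x y /=; rewrite hf hg.
Qed.

Lemma iso_card (S T : sol) : iso S T -> #|S| = #|T|.
Proof. by case=> f [bf _]; exact: bij_eq_card bf. Qed.

Lemma eqv_hom (S T : sol) (f : S -> T) (g : T -> S) :
  cancel g f -> (forall x y, f (sg x y) = sg (f x) (f y)) ->
  forall x y, eqv x y -> eqv (f x) (f y).
Proof. by move=> gK hf x y E w; rewrite -(gK w) -!hf E. Qed.

Lemma iso_ret (S T : sol) : good S -> good T -> iso S T -> iso (ret S) (ret T).
Proof.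
move=> GS GT [f [[g fK gK] hf]].
have hg : forall u v, g (sg u v) = sg (g u) (g v).
  by move=> u v; apply: (can_inj fK); rewrite hf !gK.
pose F := fun A : ret S => (clsR (f (rep A)) : ret T).
pose G := fun B : ret T => (clsR (g (rep B)) : ret S).
have FclsR x : F (clsR x) = clsR (f x).
  apply/clsR_eq; apply: (eqv_hom gK hf); exact: rep_clsR.
have GclsR x : G (clsR x) = clsR (g x).
  apply/clsR_eq; apply: (eqv_hom fK hg); exact: rep_clsR.
exists F; split.
- exists G.
  + by move=> A; have [a ->] := exP A; rewrite FclsR GclsR fK.
  + by move=> B; have [b ->] := exP B; rewrite GclsR FclsR gK.
- move=> A B; have [a ->] := exP A; have [b ->] := exP B.
  by rewrite (K GS) !FclsR hf (K GT).
Qed.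

Definition psol (S T : sol) : sol :=
  @Sol (S * T)%type (fun p q => (sg p.1 q.1, sg p.2 q.2))
                    (fun q p => (gm q.1 p.1, gm q.2 p.2)).

Lemma eqv_psol (S T : sol) (p q : psol S T) :
  eqv p q <-> eqv p.1 q.1 /\ eqv p.2 q.2.
Proof.
split.
- move=> E; split => z.
  + exact: (congr1 fst (E (z, p.2))).
  + exact: (congr1 snd (E (p.1, z))).
- by case=> E1 E2 z /=; rewrite E1 E2.
Qed.

Lemma good_psol (S T : sol) : good S -> good T -> good (psol S T).
Proof.
move=> [i1 H1] [i2 H2]; split.
- move=> [x1 x2] [a1 a2] [b1 b2] /= [/i1 -> /i2 ->] //.
- move=> [x1 x2] [y1 y2] /=.
  have [t1 [Ht1 Hz1]] := H1 x1 y1; have [t2 [Ht2 Hz2]] := H2 x2 y2.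
  exists (t1, t2) => /=; rewrite Ht1 Ht2; split => // [[z1 z2]] /=.
  by rewrite Hz1 Hz2.
Qed.

Lemma prod_ret (S T : sol) : good S -> good T ->
  iso (ret (psol S T)) (psol (ret S) (ret T)).
Proof.
move=> GS GT.
have GP := good_psol GS GT.
pose F := fun A : ret (psol S T) =>
  ((clsR (rep A).1 : ret S), (clsR (rep A).2 : ret T)) : psol (ret S) (ret T).
pose G := fun CD : psol (ret S) (ret T) =>
  (clsR ((rep CD.1, rep CD.2) : psol S T) : ret (psol S T)).
have FclsR p : F (clsR p) = (clsR p.1, clsR p.2).
  have /eqv_psol [E1 E2] := rep_clsR p.
  by rewrite /F; congr pair; apply/clsR_eq.
have GclsR a b : G (clsR a, clsR b) = clsR ((a, b) : psol S T).
  apply/clsR_eq; apply/eqv_psol; split; exact: rep_clsR.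
exists F; split.
- exists G.
  + by move=> A; have [[a b] ->] := exP A; rewrite FclsR GclsR.
  + move=> [C D]; have [c ->] := exP C; have [d ->] := exP D.
    by rewrite GclsR FclsR.
- move=> A B; have [p ->] := exP A; have [q ->] := exP B.
  rewrite (K GP) !FclsR; apply: esym.
  exact: (congr2 pair (K GS p.1 q.1) (K GT p.2 q.2)).
Qed.

Lemma main_iter (S : sol) : ndi_solution S -> forall k,
  [/\ good (Ret_iter k S), good (Ret_iter k (induced S)) &
      iso (Ret_iter k (induced S)) (psol (Ret_iter k S) (Ret_iter k S))].
Proof.
move=> H; have G := ndi_good H.
elim=> [|k [G1 G2 I]].
- split => //; first exact: (good_psol G G).
  exact: iso_refl.
- rewrite /Ret_iter !iterS -/(Ret_iter k S) -/(Ret_iter k (induced S)).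
  split; [exact: good_ret | exact: good_ret |].
  apply: iso_trans (prod_ret G1 G1).
  exact: iso_ret G2 (good_psol G1 G1) I.
Qed.

Lemma card_iter (S : sol) : ndi_solution S -> forall k,
  #|car (Ret_iter k (induced S))| = 1 <-> #|car (Ret_iter k S)| = 1.
Proof.
move=> H k; have [_ _ I] := main_iter H k.
rewrite (iso_card I) /= card_prod.
split; first by move/eqP; rewrite muln_eq1 => /andP [/eqP -> _].
by move=> ->.
Qed.

Lemma inv_lift (S : sol) (Y : {set S}) : ndi_solution S -> nd_invariant Y ->
  nd_invariant [set p : induced S | p.1 \in Y].
Proof.
case=> Hb [Hn Hi] [C1 [C2 [C3 C4]]]; split; [|split; [|split]].
- move=> [x1 x2] [y1 y2]; rewrite !inE /= => hx hy.
  by have [? ?] := C1 x1 y1 hx hy.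
- move=> [x1 x2]; rewrite inE /= => hx [z1 z2]; rewrite inE /= => hz.
  have [[y1 [hy1 [e1 u1]]] [w1 [hw1 [f1 v1]]]] := C2 x1 hx z1 hz.
  case: (Hn x2) => [[g2 c2 c2'] [h2 d2 d2']].
  split.
  + exists (y1, g2 z2); rewrite inE /=; split => //.
    split; first by rewrite e1 c2'.
    move=> [y1' y2']; rewrite inE /= => hy [E1 E2].
    by rewrite (u1 y1' hy E1) -E2 c2.
  + exists (w1, h2 z2); rewrite inE /=; split => //.
    split; first by rewrite f1 d2'.
    move=> [y1' y2']; rewrite inE /= => hy [E1 E2].
    by rewrite (v1 y1' hy E1) -E2 d2.
- move=> [x1 x2] [y1 y2] [z1 z2]; rewrite !inE /= => hx hy hz.
  have := C3 x1 y1 z1 hx hy hz; have := Hb (x2, y2, z2).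
  rewrite /r12 /r23 /rmap /=.
  case=> e1 e2 e3 [f1 f2 f3].
  by rewrite e1 e2 e3 f1 f2 f3.
- move=> [x1 x2] [y1 y2]; rewrite !inE /= => hx hy.
  have := C4 x1 y1 hx hy; have := Hi (x2, y2).
  rewrite /rmap /=.
  case=> e1 e2 [f1 f2].
  by rewrite e1 e2 f1 f2.
Qed.

Theorem lemma3p10 (S : sol) :
  ndi_solution S ->
  [/\ (irretractable S -> irretractable (induced S)),
      (forall l : nat, multipermutation_level S l ->
                       multipermutation_level (induced S) l)
    & (decomposable S -> decomposable (induced S))].
Proof.
move=> H; split.
- by move=> Hir k /(card_iter H k); apply: Hir.
- move=> l [H1 H2]; split; first by apply/(card_iter H l).
  by move=> k Hk /(card_iter H k); apply: H2.
- case=> Y [Z [nY nZ dYZ UYZ [IY IZ]]].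
  exists [set p : induced S | p.1 \in Y], [set p : induced S | p.1 \in Z].
  have [y hy] := set0Pn _ nY; have [z hz] := set0Pn _ nZ.
  split.
  + by apply/set0Pn; exists (y, y); rewrite inE.
  + by apply/set0Pn; exists (z, z); rewrite inE.
  + rewrite disjoints_subset; apply/subsetP => p; rewrite !inE => h1.
    by rewrite (disjointFr dYZ h1).
  + apply/setP => p; rewrite !inE.
    have : p.1 \in Y :|: Z by rewrite UYZ inE.
    by rewrite inE.
  + by split; apply: inv_lift.
Qed.
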